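(* Let $\mathbb X$ be a Euclidean space, $g\colon\mathbb X\to\mathbb R^m$ twice continuously differentiable, $D\subset\mathbb R^m$ closed and locally polyhedral around $g(\bar x)$, $\Phi(x):=g(x)-D$, $(\bar x,0)\in\operatorname{gph}\Phi$, $u\in\mathbb S_{\mathbb X}$. Assume SOSCMS$(u)$: for all $y^*$, [$\nabla g(\bar x)^*y^*=0$, $\nabla^2\langle y^*,g\rangle(\bar x)[u,u]\ge0$, $y^*\in\mathcal N_D(g(\bar x);\nabla g(\bar x)u)$] implies $y^*=0$. Then: (a) for each $s\in\mathbb X$ and all $y^*,z^*$, [$\nabla g(\bar x)^*y^*=0$, $\nabla^2\langle y^*,g\rangle(\bar x)(u)+\nabla g(\bar x)^*z^*=0$, $y^*\in\mathcal N_{\mathbf T(u)}(w_s(u,0))$, and $z^*\in\mathcal N_{\mathbf T(u)}(w_s(u,0))$ or $z^*\in\mathcal T_{\mathcal N_{\mathbf T(u)}(w_s(u,0))}(y^* )$] implies $y^*=0$; and (b) for each $x^*,s\in\mathbb X$, $y^*,z^*\in\mathbb R^m$ and $\alpha\ge0$ with $v:=\alpha y^*$ satisfying $x^*=\nabla^2\langle y^*,g\rangle(\bar x)(u)+\nabla g(\bar x)^*z^*$, $y^*\in\mathcal N_{\mathbf T(u)}(w_s(u,v))\cap\ker\nabla g(\bar x)^*$, and $z^*\in\mathcal N_{\mathbf T(u)}(w_s(u,v))$ or $z^*\in\mathcal T_{\mathcal N_{\mathbf T(u)}(w_s(u,v))}(y^* )$, there is $\lambda\in\mathcal N_D(g(\bar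 x))$ with $x^*=\nabla g(\bar x)^*\lambda$.
   Context: $\mathbf T(u):=\mathcal T_{\mathcal T_D(g(\bar x))}(\nabla g(\bar x)u)$, $w_s(u,v):=\nabla g(\bar x)s+\tfrac12\nabla^2g(\bar x)[u,u]-v$, with $\nabla^2g(\bar x)[u,u]=(\langle u,\nabla^2g_i(\bar x)u\rangle)_{i=1}^m$; $\nabla^2\langle y^*,g\rangle(\bar x)(u)$ is the Hessian of $x\mapsto\langle y^*,g(x)\rangle$ applied to $u$ and $\nabla^2\langle y^*,g\rangle(\bar x)[u,u]$ the associated quadratic form. $\mathcal T$, $\mathcal N$ tangent and limiting normal cones; $\mathcal N_D(y;w)$ directional limiting normal cone (all $\eta$ with $w_k\to w$, $t_k\downarrow0$, $\eta_k\to\eta$, $\eta_k\in\widehat{\mathcal N}_D(y+t_kw_k)$). Locally polyhedral: intersection with a box around $g(\bar x)$ is a finite union of convex polyhedra. *)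

(* Defs.v *)
From mathcomp Require Import all_boot all_order all_algebra.
From mathcomp Require Import reals.
Set Implicit Arguments. Unset Strict Implicit. Unset Printing Implicit Defensive.
Import Order.TTheory GRing.Theory Num.Theory.
Local Open Scope ring_scope.

Section Defs.
Variable R : realType.

Definition vec (n : nat) := 'cV[R]_n.
Definition vset (n : nat) := vec n -> Prop.

Definition dot n (u v : vec n) : R := \sum_(i < n) u i 0 * v i 0.
Definition enorm n (u : vec n) : R := Num.sqrt (dot u u).

Definition vcvg n (x : nat -> vec n) (a : vec n) : Prop :=
  forall eps : R, 0 < eps -> exists N : nat, forall k, (N <= k)%N -> enorm (x k - a) < eps.
Definition tdown0 (t : nat -> R) : Prop :=
  (forall k, 0 < t k) /\
  (forall eps : R, 0 < eps -> exists N : nat, forall k, (N <= k)%N -> t k < eps).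

Definition closed_set n (C : vset n) : Prop :=
  forall (y : nat -> vec n) (a : vec n), (forall k, C (y k)) -> vcvg y a -> C a.

Definition tangent_cone n (C : vset n) (y : vec n) : vset n := fun w =>
  C y /\ exists (t : nat -> R) (wk : nat -> vec n),
    tdown0 t /\ vcvg wk w /\ forall k, C (y + t k *: wk k).

Definition regular_normal_cone n (C : vset n) (y : vec n) : vset n := fun eta =>
  C y /\ forall eps : R, 0 < eps -> exists delta : R, 0 < delta /\
    forall y' : vec n, C y' -> enorm (y' - y) < delta ->
      dot eta (y' - y) <= eps * enorm (y' - y).

Definition normal_cone n (C : vset n) (y : vec n) : vset n := fun eta =>
  C y /\ exists (yk etak : nat -> vec n),
    vcvg yk y /\ vcvg etak eta /\
    forall k, C (yk k) /\ regular_normal_cone C (yk k) (etak k).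

Definition dir_normal_cone n (C : vset n) (y w : vec n) : vset n := fun eta =>
  exists (t : nat -> R) (wk etak : nat -> vec n),
    tdown0 t /\ vcvg wk w /\ vcvg etak eta /\
    forall k, regular_normal_cone C (y + t k *: wk k) (etak k).

Definition convex_polyhedron n (P : vset n) : Prop :=
  exists (k : nat) (A : 'M[R]_(k, n)) (b : vec k),
    forall y, P y <-> forall i, (A *m y) i 0 <= b i 0.

Definition locally_polyhedral n (D : vset n) (y0 : vec n) : Prop :=
  exists r : R, 0 < r /\ exists (k : nat) (P : 'I_k -> vset n),
    (forall j, convex_polyhedron (P j)) /\
    forall y, (D y /\ forall i, `|y i 0 - y0 i 0| <= r) <-> exists j, P j y.

Definition frechet_deriv n m (f : vec n -> vec m) (x : vec n) (A : 'M[R]_(m, n)) :=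
  forall eps : R, 0 < eps -> exists delta : R, 0 < delta /\
    forall h : vec n, enorm h < delta ->
      enorm (f (x + h) - f x - A *m h) <= eps * enorm h.

Definition continuous_mx n p q (F : vec n -> 'M[R]_(p, q)) :=
  forall (x : vec n) (i : 'I_p) (j : 'I_q) (eps : R), 0 < eps ->
    exists delta : R, 0 < delta /\
      forall x', enorm (x' - x) < delta -> `|F x' i j - F x i j| < eps.

Definition C2_with n m (g : vec n -> vec m) (Dg : vec n -> 'M[R]_(m, n))
    (Hg : 'I_m -> vec n -> 'M[R]_n) : Prop :=
  (forall x, frechet_deriv g x (Dg x)) /\
  (forall i x, frechet_deriv (fun x' => (row i (Dg x'))^T) x (Hg i x)) /\
  (forall i, continuous_mx (Hg i)).

Definition hess_lag n m (Hg : 'I_m -> vec n -> 'M[R]_n) (x : vec n) (y : vec m) (u : vec n)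
  : vec n := \sum_(i < m) y i 0 *: (Hg i x *m u).
Definition hess_lag_quad n m (Hg : 'I_m -> vec n -> 'M[R]_n) (x : vec n) (y : vec m) (u : vec n)
  : R := dot u (hess_lag Hg x y u).
Definition hess_quad n m (Hg : 'I_m -> vec n -> 'M[R]_n) (x u : vec n) : vec m :=
  \col_(i < m) dot u (Hg i x *m u).

Definition Tcone n m (D : vset m) (g : vec n -> vec m) (Dg : vec n -> 'M[R]_(m, n))
  (xb u : vec n) : vset m :=
  tangent_cone (tangent_cone D (g xb)) (Dg xb *m u).

Definition wsv n m (Dg : vec n -> 'M[R]_(m, n)) (Hg : 'I_m -> vec n -> 'M[R]_n)
  (xb s u : vec n) (v : vec m) : vec m :=
  Dg xb *m s + 2^-1 *: hess_quad Hg xb u - v.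

End Defs.

(* Main.v *)
Require Import Defs.
From mathcomp Require Import all_boot all_order all_algebra.
From mathcomp Require Import reals.
Import Order.TTheory GRing.Theory Num.Theory.
Local Open Scope ring_scope.

From mathcomp Require Import ring lra.
From mathcomp Require boolp.
Set Implicit Arguments. Unset Strict Implicit. Unset Printing Implicit Defensive.
Section Norms.
Variable R : realType.
Variable n : nat.
Implicit Types a b c : vec R n.

Lemma dotC a b : dot a b = dot b a.
Proof. by apply: eq_bigr => i _; rewrite mulrC. Qed.

Lemma dotDr a b c : dot a (b + c) = dot a b + dot a c.
Proof. by rewrite /dot -big_split /=; apply: eq_bigr => i _; rewrite mxE mulrDr. Qed.

Lemma dotZr a b (t : R) : dot a (t *: b) = t * dot a b.
Proof. by rewrite /dot mulr_sumr; apply: eq_bigr => i _; rewrite mxE mulrCA. Qed.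

Lemma dotNr a b : dot a (- b) = - dot a b.
Proof. by rewrite -scaleN1r dotZr mulN1r. Qed.

Lemma dotBr a b c : dot a (b - c) = dot a b - dot a c.
Proof. by rewrite dotDr dotNr. Qed.

Lemma dotDl a b c : dot (b + c) a = dot b a + dot c a.
Proof. by rewrite dotC dotDr !(dotC a). Qed.

Lemma dotZl a b (t : R) : dot (t *: b) a = t * dot b a.
Proof. by rewrite dotC dotZr dotC. Qed.

Lemma dotBl a b c : dot (b - c) a = dot b a - dot c a.
Proof. by rewrite dotC dotBr !(dotC a). Qed.

Lemma dot0r a : dot a 0 = 0.
Proof. by rewrite /dot big1 // => i _; rewrite mxE mulr0. Qed.

Lemma dot0l a : dot 0 a = 0.
Proof. by rewrite dotC dot0r. Qed.

Lemma dot_ge0 a : 0 <= dot a a.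
Proof. by apply: sumr_ge0 => i _; rewrite -expr2 sqr_ge0. Qed.

Lemma dot_eq0 a : dot a a = 0 -> a = 0.
Proof.
move=> h; apply/matrixP => i j; rewrite (ord1 j) mxE.
have := psumr_eq0P (P := predT) (fun i _ => sqr_ge0 (a i 0)).
rewrite /dot in h.
have h' : \sum_(i < n) a i 0 ^+ 2 = 0 by rewrite -[RHS]h; apply: eq_bigr => k _; rewrite expr2.
by move=> /(_ h' i isT) /eqP; rewrite sqrf_eq0 => /eqP.
Qed.

Lemma enorm_ge0 a : 0 <= enorm a.
Proof. exact: sqrtr_ge0. Qed.

Lemma enorm_sq a : enorm a ^+ 2 = dot a a.
Proof. by rewrite /enorm sqr_sqrtr // dot_ge0. Qed.

Lemma enormZ a (t : R) : enorm (t *: a) = `|t| * enorm a.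
Proof.
rewrite /enorm dotZl dotZr mulrA -expr2 sqrtrM ?sqr_ge0 //.
by rewrite sqrtr_sqr.
Qed.

Lemma enormN a : enorm (- a) = enorm a.
Proof. by rewrite -scaleN1r enormZ normrN normr1 mul1r. Qed.

Lemma enormB a b : enorm (a - b) = enorm (b - a).
Proof. by rewrite -enormN opprB. Qed.

Lemma enorm0 : enorm (0 : vec R n) = 0.
Proof. by rewrite /enorm dot0r sqrtr0. Qed.

Lemma enorm_eq0 a : enorm a = 0 -> a = 0.
Proof. by move=> h; apply: dot_eq0; rewrite -enorm_sq h expr2 mulr0. Qed.

Lemma cauchy_schwarz a b : dot a b <= enorm a * enorm b.
Proof.
have [ha|ha] := eqVneq (enorm a) 0.
  by rewrite (enorm_eq0 ha) dot0l enorm0 mul0r.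
have [hb|hb] := eqVneq (enorm b) 0.
  by rewrite (enorm_eq0 hb) dot0r enorm0 mulr0.
set s := enorm a; set t := enorm b.
have s0 : 0 < s by rewrite lt0r ha enorm_ge0.
have t0 : 0 < t by rewrite lt0r hb enorm_ge0.
have := dot_ge0 (t *: a - s *: b).
rewrite dotBl !dotBr !dotZl !dotZr -!enorm_sq -/s -/t (dotC b a) => H.
have : s * t * dot a b <= s * t * (s * t) by nra.
by rewrite ler_pM2l ?mulr_gt0.
Qed.

Lemma cs_abs a b : `|dot a b| <= enorm a * enorm b.
Proof.
rewrite ler_norml cauchy_schwarz andbT lerNl -dotNr.
by rewrite (le_trans (cauchy_schwarz _ _)) // enormN.
Qed.

Lemma enormD a b : enorm (a + b) <= enorm a + enorm b.
Proof.
rewrite -(ler_pXn2r (n:=2)) // ?nnegrE ?addr_ge0 ?enorm_ge0 //.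
rewrite enorm_sq dotDl !dotDr (dotC b a) -!enorm_sq.
have := cauchy_schwarz a b; nra.
Qed.

Lemma coord_le a i : `|a i 0| <= enorm a.
Proof.
rewrite -(ler_pXn2r (n:=2)) // ?nnegrE ?enorm_ge0 //.
rewrite enorm_sq real_normK ?num_real // /dot (bigD1 i) //= -expr2 lerDl.
by apply: sumr_ge0 => k _; rewrite -expr2 sqr_ge0.
Qed.


Lemma minl (x y : R) : Num.min x y <= x.
Proof. by rewrite ge_min lexx. Qed.
Lemma minr (x y : R) : Num.min x y <= y.
Proof. by rewrite ge_min lexx orbT. Qed.
Lemma min_gt0 (x y : R) : 0 < x -> 0 < y -> 0 < Num.min x y.
Proof. by move=> hx hy; rewrite lt_min hx hy. Qed.

Lemma archi_inv (eps : R) : 0 < eps ->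
  exists N : nat, forall k, (N <= k)%N -> (k.+1%:R)^-1 < eps.
Proof.
move=> e0; exists (Num.Def.archi_bound (eps^-1)) => k hk.
have ei : 0 < eps^-1 by rewrite invr_gt0.
have H := archi_boundP (ltW ei).
rewrite invf_plt ?posrE //; apply: (lt_le_trans H).
by rewrite ler_nat (leq_trans hk).
Qed.

Lemma small_eq0 (d e : R) : 0 <= e ->
  (forall eps, 0 < eps -> `|d| <= eps * e) -> d = 0.
Proof.
move=> e0 H; apply/eqP; apply/negPn/negP => dn.
have d0 : 0 < `|d| by rewrite normr_gt0.
have := H (`|d| / (e + 1)) (divr_gt0 d0 (ltr_wpDl e0 ltr01)).
rewrite mulrAC ler_pdivlMr ?(ltr_wpDl e0 ltr01) //.
nra.
Qed.

Lemma fin_delta (I : finType) (P : I -> R -> Prop) :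
  (forall i d d', 0 < d' -> d' <= d -> P i d -> P i d') ->
  (forall i, exists2 d, 0 < d & P i d) -> exists2 d, 0 < d & forall i, P i d.
Proof.
move=> Hm Hi.
suff H : forall s : seq I, exists2 d, 0 < d & forall i, i \in s -> P i d.
  have [d d0 Hd] := H (enum I).
  by exists d => // i; apply: Hd; rewrite mem_enum.
elim=> [|x s [d1 d10 IH]]; first by exists 1.
have [d2 d20 H2] := Hi x.
exists (Num.min d1 d2); first exact: min_gt0.
move=> i; rewrite inE => /orP [/eqP ->|iS].
  exact: Hm (min_gt0 d10 d20) (minr _ _) H2.
exact: Hm (min_gt0 d10 d20) (minl _ _) (IH _ iS).
Qed.

Definition cone (C : vset R n) := forall x (t : R), 0 < t -> C x -> C (t *: x).

Lemma tangent_cone_cone (C : vset R n) y : cone (tangent_cone C y).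
Proof.
move=> w l l0 [Cy [t [wk [[tp tc] [cv Hk]]]]]; split => //.
exists (fun k => t k / l), (fun k => l *: wk k); split; [split|split].
- by move=> k; rewrite divr_gt0.
- move=> eps e0; have [N HN] := tc (eps * l) (mulr_gt0 e0 l0).
  by exists N => k hk; rewrite ltr_pdivrMr // HN.
- move=> eps e0; have [N HN] := cv (eps / l) (divr_gt0 e0 l0).
  exists N => k hk; rewrite -scalerBr enormZ gtr0_norm //.
  by rewrite mulrC -ltr_pdivlMr // HN.
- by move=> k; rewrite scalerA divfK ?gt_eqF.
Qed.

Lemma rn_local (A B : vset R n) a b rho eta : 0 < rho -> B b ->
  (forall h, enorm h < rho -> B (b + h) -> A (a + h)) ->
  regular_normal_cone A a eta -> regular_normal_cone B b eta.
Proof.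
move=> r0 Bb H [Aa Hr]; split => // eps e0.
have [d [d0 Hd]] := Hr eps e0.
exists (Num.min d rho); split; first exact: min_gt0.
move=> y' By' hy'.
have h1 : enorm (y' - b) < rho := lt_le_trans hy' (minr _ _).
have h2 : enorm (y' - b) < d := lt_le_trans hy' (minl _ _).
have Ah : A (a + (y' - b)) by apply: H => //; rewrite addrC subrK.
have := Hd _ Ah; rewrite addrAC subrr add0r; exact.
Qed.

Lemma rn_cone (C : vset R n) x l eta : cone C -> 0 < l ->
  regular_normal_cone C x eta -> regular_normal_cone C (l *: x) eta.
Proof.
move=> hC l0 [Cx Hr]; split; first exact: hC.
move=> eps e0; have [d [d0 Hd]] := Hr eps e0.
exists (l * d); split; first exact: mulr_gt0.
move=> y' Cy' hy'.
have key : y' - l *: x = l *: (l^-1 *: y' - x).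
  by rewrite scalerBr scalerA mulfV ?gt_eqF // scale1r.
have li : 0 < l^-1 by rewrite invr_gt0.
have Cx' : C (l^-1 *: y') := hC _ _ li Cy'.
rewrite key enormZ gtr0_norm // in hy'.
rewrite ltr_pM2l // in hy'.
have := Hd _ Cx' hy'.
rewrite key dotZr enormZ gtr0_norm // mulrCA ler_pM2l //.
Qed.

Lemma rn_orth (C : vset R n) x eta : cone C ->
  regular_normal_cone C x eta -> dot eta x = 0.
Proof.
move=> hC [Cx Hr]; apply: (small_eq0 (enorm_ge0 x)) => eps e0.
have [d [d0 Hd]] := Hr eps e0.
set e := enorm x.
have e_ge0 : 0 <= e := enorm_ge0 x.
have e1 : 0 < 2 * (e + 1) by nra.
set t := Num.min (1/2) (d / (2 * (e + 1))).
have t0 : 0 < t by apply: min_gt0 => //; rewrite divr_gt0.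
have t1 : t <= 1/2 := minl _ _.
have t2 : t * (2 * (e + 1)) <= d by rewrite -ler_pdivlMr // minr.
have te : enorm (t *: x) < d by rewrite enormZ gtr0_norm // -/e; nra.
have tne : enorm ((- t) *: x) < d by rewrite enormZ normrN gtr0_norm // -/e; nra.
have C1 : C ((1 + t) *: x) by apply: hC => //; lra.
have C2 : C ((1 - t) *: x) by apply: hC => //; lra.
have H1 := Hd _ C1.
have H2 := Hd _ C2.
have E1 : (1 + t) *: x - x = t *: x by rewrite scalerDl scale1r addrAC subrr add0r.
have E2 : (1 - t) *: x - x = (- t) *: x.
  by rewrite scalerBl scale1r addrAC subrr add0r scaleNr.
rewrite E1 in H1; rewrite E2 in H2.
have {}H1 := H1 te; have {}H2 := H2 tne.
rewrite dotZr enormZ gtr0_norm // in H1.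
rewrite dotZr enormZ normrN gtr0_norm // in H2.
rewrite -/e in H1 H2.
rewrite ler_norml; apply/andP; split; nra.
Qed.

Lemma nc_orth (C : vset R n) x eta : cone C ->
  normal_cone C x eta -> dot eta x = 0.
Proof.
move=> hC [Cx [yk [etak [cy [ce Hk]]]]].
have H0 k : dot (etak k) (yk k) = 0 by apply: rn_orth hC (Hk k).2.
apply: (small_eq0 (@ler01 R)) => eps e0; rewrite mulr1.
set X := enorm x; set E := enorm eta.
have X0 : 0 <= X := enorm_ge0 x. have E0 : 0 <= E := enorm_ge0 eta.
set e1 := Num.min 1 (eps / (X + E + 2)).
have e10 : 0 < e1 by apply: min_gt0 => //; rewrite divr_gt0 //; lra.
have e11 : e1 <= 1 := minl _ _.
have e12 : e1 * (X + E + 2) <= eps by rewrite -ler_pdivlMr ?minr //; lra.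
have [N1 HN1] := ce e1 e10.
have [N2 HN2] := cy e1 e10.
set k := maxn N1 N2.
have a1 := HN1 k (leq_maxl _ _).
have b1 := HN2 k (leq_maxr _ _).
have dec : dot eta x = dot (eta - etak k) x + dot (etak k) (x - yk k).
  by rewrite dotBl dotBr H0 subr0 subrK.
rewrite dec.
have c1 := cs_abs (eta - etak k) x.
have c2 := cs_abs (etak k) (x - yk k).
rewrite enormB in c1; rewrite enormB in c2.
have n1 : enorm (etak k) <= E + enorm (etak k - eta).
  by rewrite -(subrK eta (etak k)) addrC (le_trans (enormD _ _)) // addrC subrK.
have ge1 := enorm_ge0 (etak k - eta).
have ge2 := enorm_ge0 (yk k - x).
have ge3 := enorm_ge0 (etak k).
apply: (le_trans (ler_normD _ _)).
rewrite -/X in c1.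
nra.
Qed.

Lemma rn_scale (C : vset R n) y eta l : 0 < l ->
  regular_normal_cone C y eta -> regular_normal_cone C y (l *: eta).
Proof.
move=> l0 [Cy Hr]; split => // eps e0.
have [d [d0 Hd]] := Hr (eps / l) (divr_gt0 e0 l0).
exists d; split => // y' Cy' hy'.
rewrite dotZl; have := Hd _ Cy' hy'.
rewrite -(ler_pM2l l0) => H; apply: (le_trans H); rewrite !mulrA.
by rewrite (mulrC l eps) -(mulrA eps) mulfV ?gt_eqF // mulr1.
Qed.

Lemma nc_scale (C : vset R n) y eta l : 0 < l ->
  normal_cone C y eta -> normal_cone C y (l *: eta).
Proof.
move=> l0 [Cy [yk [etak [cy [ce Hk]]]]]; split => //.
exists yk, (fun k => l *: etak k); split => //; split.
- move=> eps e0; have [N HN] := ce (eps / l) (divr_gt0 e0 l0).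
  exists N => k hk; rewrite -scalerBr enormZ gtr0_norm //.
  by rewrite mulrC -ltr_pdivlMr // HN.
- by move=> k; split; [exact: (Hk k).1 | apply: rn_scale l0 (Hk k).2].
Qed.

Lemma nc_closed (C : vset R n) y (z : nat -> vec R n) a :
  (forall k, normal_cone C y (z k)) -> vcvg z a -> normal_cone C y a.
Proof.
move=> Hz cz.
have Cy : C y by case: (Hz 0%N).
have Hex : forall k, exists p : vec R n * vec R n,
    regular_normal_cone C p.1 p.2 /\ enorm (p.1 - y) < (k.+1%:R)^-1 /\
    enorm (p.2 - z k) < (k.+1%:R)^-1.
  move=> k; have [_ [yk [etak [cy [ce Hk]]]]] := Hz k.
  have ek : 0 < (k.+1%:R : R)^-1 by rewrite invr_gt0 ltr0Sn.
  have [N1 HN1] := cy _ ek; have [N2 HN2] := ce _ ek.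
  exists (yk (maxn N1 N2), etak (maxn N1 N2)); split; first exact: (Hk _).2.
  by split; [apply: HN1; rewrite leq_maxl | apply: HN2; rewrite leq_maxr].
have [f Hf] := boolp.choice Hex.
split => //; exists (fun k => (f k).1), (fun k => (f k).2); split; [|split].
- move=> eps e0; have [N HN] := archi_inv e0.
  by exists N => k hk; apply: lt_trans (HN k hk); case: (Hf k) => _ [].
- move=> eps e0; have e2 : 0 < eps / 2 by rewrite divr_gt0.
  have [N1 HN1] := cz _ e2; have [N2 HN2] := archi_inv e2.
  exists (maxn N1 N2) => k hk.
  have h1 := HN1 k (leq_trans (leq_maxl _ _) hk).
  have h2 := HN2 k (leq_trans (leq_maxr _ _) hk).
  have h3 : enorm ((f k).2 - z k) < (k.+1%:R)^-1 by case: (Hf k) => _ [].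
  rewrite -(subrK (z k) (f k).2) -addrA.
  apply: le_lt_trans (enormD _ _) _. move: h1 h2 h3; set r := (k.+1%:R)^-1; set q := eps / 2; move=> h1 h2 h3; have : eps = q + q by rewrite /q -splitr. lra.
- by move=> k; split; [exact: (Hf k).1.1 | exact: (Hf k).1].
Qed.

Lemma dir_to_nc (C : vset R n) y w eta : C y ->
  dir_normal_cone C y w eta -> normal_cone C y eta.
Proof.
move=> Cy [t [wk [etak [[tp tc] [cw [ce Hk]]]]]]; split => //.
exists (fun k => y + t k *: wk k), etak; split; [|split => //].
- move=> eps e0.
  have W0 := enorm_ge0 w.
  have [N1 HN1] := cw 1 ltr01.
  have [N2 HN2] := tc (eps / (enorm w + 1)) (divr_gt0 e0 (ltr_wpDl W0 ltr01)).
  exists (maxn N1 N2) => k hk.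
  have h1 := HN1 k (leq_trans (leq_maxl _ _) hk).
  have h2 := HN2 k (leq_trans (leq_maxr _ _) hk).
  rewrite addrAC subrr add0r enormZ gtr0_norm //.
  have n1 : enorm (wk k) <= enorm w + enorm (wk k - w).
    by rewrite -{1}(subrK w (wk k)) addrC (le_trans (enormD _ _)) // addrC.
  rewrite ltr_pdivlMr in h2; last by lra.
  have := tp k; have := enorm_ge0 (wk k); nra.
- by move=> k; split; [exact: (Hk k).1 | exact: Hk].
Qed.


Lemma lin_bound (k : nat) (A : 'M[R]_(k, n)) i (h : vec R n) :
  `|(A *m h) i 0| <= (\sum_l `|A i l|) * enorm h.
Proof.
rewrite mxE mulr_suml; apply: (le_trans (ler_norm_sum _ _ _)).
apply: ler_sum => l _; rewrite normrM; apply: ler_wpM2l => //.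
exact: coord_le.
Qed.

Lemma lin_small (k : nat) (A : 'M[R]_(k, n)) i (c : R) : 0 < c ->
  exists2 d, 0 < d & forall h, enorm h < d -> `|(A *m h) i 0| < c.
Proof.
move=> c0; set M := \sum_l `|A i l|.
have M0 : 0 <= M by apply: sumr_ge0 => l _.
have M1 : 0 < M + 1 by lra.
exists (c / (M + 1)); first by rewrite divr_gt0.
move=> h hh; apply: le_lt_trans (lin_bound A i h) _.
have E : c / (M + 1) * (M + 1) = c by rewrite divfK ?gt_eqF.
have q0 : 0 < c / (M + 1) by rewrite divr_gt0.
move: E q0 hh; set q := c / (M + 1) => E q0 hh.
have : M * enorm h <= M * q by rewrite ler_wpM2l // ltW.
rewrite mulrDr mulr1 in E; rewrite (mulrC q) in E. rewrite -/M. clearbody q M. lra.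
Qed.

Lemma mxDe (k : nat) (A : 'M[R]_(k, n)) (x y : vec R n) i :
  (A *m (x + y)) i 0 = (A *m x) i 0 + (A *m y) i 0.
Proof. by rewrite mulmxDr mxE. Qed.

Lemma mxBe (k : nat) (A : 'M[R]_(k, n)) (x y : vec R n) i :
  (A *m (x - y)) i 0 = (A *m x) i 0 - (A *m y) i 0.
Proof. by rewrite mulmxBr !mxE. Qed.

Lemma mxZe (k : nat) (A : 'M[R]_(k, n)) (x : vec R n) (t : R) i :
  (A *m (t *: x)) i 0 = t * (A *m x) i 0.
Proof. by rewrite -scalemxAr mxE. Qed.

Lemma poly_local (P : vset R n) y0 : convex_polyhedron P ->
  exists Q : vset R n, [/\ convex_polyhedron Q, cone Q,
    (forall h, ~ Q h -> exists2 rho, 0 < rho &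
        forall h', enorm (h' - h) < rho -> ~ Q h')
    & exists2 d, 0 < d & forall h, enorm h < d -> (P (y0 + h) <-> Q h)].
Proof.
move=> [k [A [b HP]]].
pose act i := (A *m y0) i 0 == b i 0.
exists (fun h => P y0 /\ forall i, act i -> (A *m h) i 0 <= 0); split.
- case: (boolp.pselect (P y0)) => Py0.
  + exists k, (\matrix_(i, l) (if act i then A i l else 0)), 0 => y.
    have E : forall i, ((\matrix_(i, l) (if act i then A i l else 0)) *m y) i 0
        = if act i then (A *m y) i 0 else 0.
      move=> i; rewrite [LHS]mxE.
      transitivity (\sum_j (if act i then A i j else 0) * y j 0).
        by apply: eq_bigr => j _; rewrite mxE.
      case: ifP => _; first by rewrite mxE.
      by rewrite big1 // => j _; rewrite mul0r.
    have z0 : forall i, (0 : 'cV[R]_k) i 0 = 0 by move=> i; rewrite mxE.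
    split.
    * by move=> [_ H] i; rewrite E z0; case: ifP => // ai; exact: H i ai.
    * move=> H; split => // i ai; have := H i; by rewrite E z0 ai.
  + exists 1%N, 0, (const_mx (-1)) => y; split; first by case.
    by move=> /(_ ord0); rewrite mul0mx !mxE; lra.
- move=> h t t0 [Py0 H]; split => // i ai; rewrite mxZe.
  by have := H i ai; nra.
- move=> h nQ; case: (boolp.pselect (P y0)) => Py0; last first.
    by exists 1 => // h' _ [].
  case: (boolP [exists i, act i && (0 < (A *m h) i 0)]).
    move=> /existsP [i /andP [ai pos]].
    have [rho r0 Hr] := lin_small A i pos.
    exists rho => // h' hh [_ H].
    have := Hr _ hh; rewrite mxBe; have := H i ai.
    move=> h1 h2; have := ler_norm ((A *m h') i 0 - (A *m h) i 0).
    rewrite real_ltr_norml ?num_real // in h2.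
    lra.
  move=> /existsPn Hn; exfalso; apply: nQ; split => // i ai.
  by have := Hn i; rewrite ai /= leNgt.
- pose Pd := fun i d => forall h, enorm h < d ->
       b i 0 - (A *m y0) i 0 != 0 -> `|(A *m h) i 0| < `|b i 0 - (A *m y0) i 0|.
  have Hm : forall i d1 d2, 0 < d2 -> d2 <= d1 -> Pd i d1 -> Pd i d2.
    move=> i d1 d2 d20 d12 H h hh; apply: H; exact: lt_le_trans hh d12.
  have Hi : forall i, exists2 d, 0 < d & Pd i d.
    move=> i; case: (eqVneq (b i 0 - (A *m y0) i 0) 0) => ci.
      by exists 1 => // h _; rewrite ci eqxx.
    have ci' : 0 < `|b i 0 - (A *m y0) i 0| by rewrite normr_gt0.
    have [d d0 Hd] := lin_small A i ci'.
    by exists d => // h hh _; apply: Hd.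
  have [d d0 Hd] := fin_delta Hm Hi.
  exists d => // h hh; have Hdh := fun i => Hd i h hh.
  case: (boolp.pselect (P y0)) => Py0.
  + have Hy := (HP y0).1 Py0.
    split.
    * move=> /HP Hyh; split => // i ai.
      have := Hyh i; rewrite mxDe; move: ai => /eqP; lra.
    * move=> [_ H]; apply/HP => i; rewrite mxDe.
      have := Hy i; case: (eqVneq ((A *m y0) i 0) (b i 0)) => ai.
        by have := H i (introT eqP ai); lra.
      move=> yi; have ne : b i 0 - (A *m y0) i 0 != 0.
        by rewrite subr_eq0 eq_sym.
      have := Hdh i ne; rewrite real_ltr_norml ?num_real //.
      rewrite ger0_norm; last by lra.
      lra.
  + split; last by case.
    move=> /HP Hyh; exfalso; apply: Py0; apply/HP => i.
    rewrite leNgt; apply/negP => gi.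
    have ne : b i 0 - (A *m y0) i 0 != 0 by rewrite subr_eq0 (lt_eqF gi).
    have := Hdh i ne; rewrite real_ltr_norml ?num_real //.
    rewrite ltr0_norm; last by lra.
    have := Hyh i; rewrite mxDe; lra.
Qed.


Definition locpoly (C : vset R n) (y0 : vec R n) := exists2 r : R, 0 < r &
  exists k (P : 'I_k -> vset R n), (forall j, convex_polyhedron (P j)) /\
    forall y : vec R n, (forall i, `|y i 0 - y0 i 0| <= r) -> (C y <-> exists j, P j y).

Lemma lp_locpoly (C : vset R n) (y0 : vec R n) : locally_polyhedral C y0 -> locpoly C y0.
Proof.
move=> [r [r0 [k [P [HP H]]]]]; exists r => //; exists k, P; split => // y hy.
split => [Cy|Ey]; first exact: (H y).1.
exact: ((H y).2 Ey).1.
Qed.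

Lemma shrink (c e : R) (k : nat) : 0 < c -> 0 <= e ->
  [/\ 0 < c / (2 * (e + 1) * k.+1%:R),
      c / (2 * (e + 1) * k.+1%:R) * e <= c / 2 * (k.+1%:R)^-1
    & c / (2 * (e + 1) * k.+1%:R) <= c * (k.+1%:R)^-1].
Proof.
move=> c0 e0; have m1 : 1 <= (k.+1%:R : R) by rewrite ler1n.
move: m1; set m := (k.+1%:R : R) => m1.
have q0 : 0 < 2 * (e + 1) * m by rewrite !mulr_gt0 //; lra.
have E : c / (2 * (e + 1) * m) * (2 * (e + 1) * m) = c by rewrite divfK ?gt_eqF.
have t0 : 0 < c / (2 * (e + 1) * m) by rewrite divr_gt0.
move: E t0; set t := c / (2 * (e + 1) * m) => E t0.
have m0 : 0 < m by lra.
have tm : 0 <= t * m by apply: mulr_ge0; lra.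
have tem : 0 <= t * e * m by apply: mulr_ge0; [apply: mulr_ge0|]; lra.
have mne : m != 0 by rewrite gt_eqF.
split => //.
- have F : c / 2 * m^-1 = t * (e + 1).
    rewrite -E; field; rewrite gt_eqF //; have := ler0n R k; lra.
  rewrite F; nra.
- have F : c * m^-1 = t * (2 * (e + 1)).
    by rewrite -E; field; rewrite gt_eqF //; have := ler0n R k; lra.
  rewrite F; nra.
Qed.

Lemma locpoly_tangent (C : vset R n) (y0 : vec R n) : locpoly C y0 -> C y0 ->
  exists2 d, 0 < d &
    (forall h, enorm h < d -> (C (y0 + h) <-> tangent_cone C y0 h)) /\
    (forall p, locpoly (tangent_cone C y0) p).
Proof.
move=> [r r0 [kP [P [HP Hloc]]]] Cy0.
have Hex := fun j => poly_local y0 (HP j).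
have [Q HQ] := boolp.choice Hex.
pose QQ h := exists j, Q j h.
pose Pd j d := forall h, enorm h < d -> (P j (y0 + h) <-> Q j h).
have Hm : forall j d1 d2, 0 < d2 -> d2 <= d1 -> Pd j d1 -> Pd j d2.
  by move=> j d1 d2 _ d12 H h hh; apply: H; apply: lt_le_trans hh d12.
have Hi : forall j, exists2 d, 0 < d & Pd j d.
  by move=> j; have [_ _ _ [d d0 Hd]] := HQ j; exists d.
have [d1 d10 Hd1] := fin_delta Hm Hi.
pose d := Num.min d1 r.
have d0 : 0 < d by apply: min_gt0.
have C1 : forall h, enorm h < d -> (C (y0 + h) <-> QQ h).
  move=> h hh.
  have box : forall i, `|(y0 + h) i 0 - y0 i 0| <= r.
    move=> i; rewrite mxE addrC addKr.
    exact: le_trans (coord_le h i) (ltW (lt_le_trans hh (minr _ _))).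
  have hh1 : enorm h < d1 := lt_le_trans hh (minl _ _).
  rewrite (Hloc _ box); split => [[j Pj]|[j Qj]]; exists j.
    exact: ((Hd1 j h hh1).1 Pj).
  exact: ((Hd1 j h hh1).2 Qj).
have Qcone : cone QQ.
  by move=> x t t0 [j Qj]; exists j; have [_ c _ _] := HQ j; apply: c.
have Qclosed : forall (w : nat -> vec R n) a,
    (exists N, forall k, (N <= k)%N -> QQ (w k)) -> vcvg w a -> QQ a.
  move=> w a [N HN] cw; case: (boolp.pselect (QQ a)) => // nQ; exfalso.
  pose Po j rho := forall h', enorm (h' - a) < rho -> ~ Q j h'.
  have Hm' : forall j d1 d2, 0 < d2 -> d2 <= d1 -> Po j d1 -> Po j d2.
    by move=> j e1 e2 _ e12 H h hh; apply: H; apply: lt_le_trans hh e12.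
  have Hi' : forall j, exists2 d, 0 < d & Po j d.
    move=> j; have [_ _ op _] := HQ j; apply: op => Qa; apply: nQ; exists j.
    exact: Qa.
  have [rho rho0 Hr] := fin_delta Hm' Hi'.
  have [N2 HN2] := cw rho rho0.
  have [j Qj] := HN (maxn N N2) (leq_maxl _ _).
  exact: (Hr j _ (HN2 _ (leq_maxr _ _)) Qj).
have C2 : forall h, QQ h <-> tangent_cone C y0 h.
  move=> h; split.
  - move=> Qh; split => //.
    have he := enorm_ge0 h.
    pose c := d / (2 * (enorm h + 1)).
    have c0 : 0 < c by rewrite divr_gt0 //; lra.
    have cE : c * (2 * (enorm h + 1)) = d by rewrite divfK // gt_eqF //; lra.
    exists (fun k => c / k.+1%:R), (fun _ => h); split; [split|split].
    + by move=> k; rewrite divr_gt0.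
    + move=> eps e0; have [N HN] := archi_inv (divr_gt0 e0 c0).
      exists N => k hk; have := HN k hk.
      by rewrite -(ltr_pM2l c0) [c * (eps / c)]mulrC divfK ?gt_eqF.
    + by move=> eps e0; exists 0%N => k _; rewrite subrr enorm0.
    + move=> k.
      have ck : 0 < c / k.+1%:R by rewrite divr_gt0 // ltr0Sn.
      have hn : enorm ((c / k.+1%:R) *: h) < d.
        rewrite enormZ gtr0_norm //.
        have m1 : 1 <= (k.+1%:R : R) by rewrite ler1n.
        have : c / k.+1%:R <= c by rewrite ler_pdivrMr ?ltr0Sn //; nra.
        move: cE; set q := c / k.+1%:R => cE cq.
        have : q * enorm h <= c * enorm h by rewrite ler_wpM2r.
        nra.
      apply/(C1 _ hn).2.
      by apply: Qcone.
  - move=> [_ [t [wk [[tp tc] [cw HC]]]]].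
    apply: (Qclosed wk h) => //.
    have he := enorm_ge0 h.
    have [N1 HN1] := cw 1 ltr01.
    have h2p : 0 < enorm h + 2 by lra.
    have [N2 HN2] := tc (d / (enorm h + 2)) (divr_gt0 d0 h2p).
    exists (maxn N1 N2) => k hk.
    have h1 := HN1 k (leq_trans (leq_maxl _ _) hk).
    have h2 := HN2 k (leq_trans (leq_maxr _ _) hk).
    have n1 : enorm (wk k) <= enorm h + enorm (wk k - h).
      by rewrite -{1}(subrK h (wk k)) addrC (le_trans (enormD _ _)) // addrC.
    have Q1 : QQ (t k *: wk k).
      have hn : enorm (t k *: wk k) < d.
        rewrite enormZ gtr0_norm //.
        rewrite ltr_pdivlMr in h2; last by lra.
        have := tp k; have := enorm_ge0 (wk k); nra.
      apply/(C1 _ hn).1; exact: HC.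
    have ti : 0 < (t k)^-1 by rewrite invr_gt0.
    have := Qcone _ _ ti Q1.
    by rewrite scalerA mulVf ?gt_eqF // scale1r.
have C3 : forall p, locpoly (tangent_cone C y0) p.
  move=> p; exists 1 => //; exists kP, Q; split.
    by move=> j; have [] := HQ j.
  by move=> y _; split => [/C2|H]; [|apply/C2].
exists d => //; split => // h hh.
by split => [/(C1 _ hh)/C2|/C2/(C1 _ hh)].
Qed.


Lemma nc_T_dir (D : vset R n) yb p w eta : locpoly D yb -> D yb ->
  normal_cone (tangent_cone (tangent_cone D yb) p) w eta ->
  dir_normal_cone D yb p eta.
Proof.
move=> lp Db [Tw [wk [etak [cw [ce Hk]]]]].
have [d1 d10 [H1 HK]] := locpoly_tangent lp Db.
have Kp : tangent_cone D yb p := Tw.1.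
have [d2 d20 [H2 _]] := locpoly_tangent (HK p) Kp.
pose tau k := d2 / (2 * (enorm (wk k) + 1) * k.+1%:R).
pose a k := tau k *: wk k.
pose pk k := p + a k.
pose sig k := d1 / (2 * (enorm (pk k) + 1) * k.+1%:R).
have inv1 : forall k, (k.+1%:R : R)^-1 <= 1.
  by move=> k; rewrite invf_le1 ?ltr0Sn // ler1n.
have inv0 : forall k, 0 < (k.+1%:R : R)^-1 by move=> k; rewrite invr_gt0 ltr0Sn.
have Ha : forall k, 0 < tau k /\ enorm (a k) <= d2 / 2 * (k.+1%:R)^-1.
  move=> k; have [t0 t1 t2] := shrink k d20 (enorm_ge0 (wk k)).
  by split => //; rewrite /a enormZ gtr0_norm.
have Ha2 : forall k, enorm (a k) <= d2 * (k.+1%:R)^-1.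
  move=> k; have [_ h] := Ha k; apply: le_trans h _.
  rewrite ler_pM2r //; lra.
have Ha' : forall k, enorm (a k) < d2.
  move=> k; have [_ h] := Ha k; apply: le_lt_trans h _.
  have : d2 / 2 * (k.+1%:R)^-1 <= d2 / 2 by apply: ler_piMr; [lra | exact: inv1].
  have : d2 / 2 < d2 by rewrite ltr_pdivrMr //; lra.
  move=> h1 h2; exact: le_lt_trans h2 h1.
have Hs : forall k, [/\ 0 < sig k, enorm (sig k *: pk k) < d1
                     & sig k <= d1 * (k.+1%:R)^-1].
  move=> k; have [t0 t1 t2] := shrink k d10 (enorm_ge0 (pk k)).
  split => //; rewrite enormZ gtr0_norm //.
  apply: le_lt_trans t1 _; have := inv1 k; have := inv0 k.
  set iv := (k.+1%:R)^-1; move=> *; nra.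
exists sig, pk, etak; split; [split|split; [|split]] => //.
- by move=> k; have [] := Hs k.
- move=> eps e0; have [N HN] := archi_inv (divr_gt0 e0 d10).
  exists N => k hk; have [_ _ s1] := Hs k; apply: le_lt_trans s1 _.
  have := HN k hk; rewrite -(ltr_pM2l d10) [d1 * (eps / d1)]mulrC divfK ?gt_eqF //.
- move=> eps e0; have [N HN] := archi_inv (divr_gt0 e0 d20).
  exists N => k hk; rewrite /pk addrAC subrr add0r.
  apply: le_lt_trans (Ha2 k) _.
  have := HN k hk; rewrite -(ltr_pM2l d20) [d2 * (eps / d2)]mulrC divfK ?gt_eqF //.
- move=> k.
  have [tk _] := Ha k.
  have r2 := rn_cone (tangent_cone_cone (C := tangent_cone D yb) (y := p)) tk (Hk k).2.
  have Ta := r2.1.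
  have r3 : regular_normal_cone (tangent_cone D yb) (pk k) (etak k).
    have rho0 : 0 < d2 - enorm (a k) by have := Ha' k; lra.
    apply: (rn_local rho0 _ _ r2).
      exact: (H2 (a k) (Ha' k)).2.
    move=> h hh; rewrite /pk -addrA => Kh.
    have hn : enorm (a k + h) < d2.
      by apply: le_lt_trans (enormD _ _) _; lra.
    exact: (H2 _ hn).1.
  have [s0 s1 _] := Hs k.
  have r4 := rn_cone (tangent_cone_cone (C := D) (y := yb)) s0 r3.
  have rho0 : 0 < d1 - enorm (sig k *: pk k) by lra.
  apply: (rn_local rho0 _ _ r4).
    exact: (H1 _ s1).2 r4.1.
  move=> h hh; rewrite -addrA => Dh.
  have hn : enorm (sig k *: pk k + h) < d1.
    by apply: le_lt_trans (enormD _ _) _; lra.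
  exact: (H1 _ hn).1.
Qed.

End Norms.

Lemma dot_mul (R : realType) (m n : nat) (A : 'M[R]_(m, n)) (y : vec R m) (s : vec R n) :
  dot y (A *m s) = dot (A^T *m y) s.
Proof.
have dE : forall k (a b : vec R k), dot a b = (a^T *m b) 0 0.
  by move=> k a b; rewrite /dot mxE; apply: eq_bigr => i _; rewrite mxE.
by rewrite !dE mulmxA trmx_mul trmxK.
Qed.

Lemma dot_sumr (R : realType) (n m : nat) (a : vec R n) (F : 'I_m -> vec R n) :
  dot a (\sum_i F i) = \sum_i dot a (F i).
Proof. exact: (big_morph (dot a) (@dotDr R n a) (@dot0r R n a)). Qed.

Lemma wsv_dot (R : realType) (n m : nat) (Dg : vec R n -> 'M[R]_(m, n))
  (Hg : 'I_m -> vec R n -> 'M[R]_n) (xb s u : vec R n) (y v : vec R m) :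
  dot y (wsv Dg Hg xb s u v) =
  dot ((Dg xb)^T *m y) s + 2^-1 * hess_lag_quad Hg xb y u - dot y v.
Proof.
rewrite /wsv dotBr dotDr dotZr dot_mul; congr (_ + _ * _ - _).
rewrite /hess_lag_quad /hess_lag dot_sumr {1}/dot.
by apply: eq_bigr => i _; rewrite dotZr /hess_quad mxE.
Qed.

Theorem proposition5p22 (R : realType) (n m : nat)
  (g : vec R n -> vec R m) (Dg : vec R n -> 'M[R]_(m, n))
  (Hg : 'I_m -> vec R n -> 'M[R]_n) (D : vset R m) (xb u : vec R n) :
  C2_with g Dg Hg ->
  closed_set D ->
  locally_polyhedral D (g xb) ->
  D (g xb) ->                                  (* (xb, 0) \in gph Phi *)
  enorm u = 1 ->                               (* u \in S_X *)
  (* SOSCMS(u) *)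
  (forall y : vec R m,
      (Dg xb)^T *m y = 0 ->
      0 <= hess_lag_quad Hg xb y u ->
      dir_normal_cone D (g xb) (Dg xb *m u) y ->
      y = 0) ->
  (* (a) *)
  (forall (s : vec R n) (y z : vec R m),
      (Dg xb)^T *m y = 0 ->
      hess_lag Hg xb y u + (Dg xb)^T *m z = 0 ->
      normal_cone (Tcone D g Dg xb u) (wsv Dg Hg xb s u 0) y ->
      (normal_cone (Tcone D g Dg xb u) (wsv Dg Hg xb s u 0) z \/
       tangent_cone (normal_cone (Tcone D g Dg xb u) (wsv Dg Hg xb s u 0)) y z) ->
      y = 0)
  /\
  (* (b) *)
  (forall (xs s : vec R n) (y z : vec R m) (alpha : R),
      0 <= alpha ->
      let v := alpha *: y in
      xs = hess_lag Hg xb y u + (Dg xb)^T *m z ->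
      normal_cone (Tcone D g Dg xb u) (wsv Dg Hg xb s u v) y ->
      (Dg xb)^T *m y = 0 ->
      (normal_cone (Tcone D g Dg xb u) (wsv Dg Hg xb s u v) z \/
       tangent_cone (normal_cone (Tcone D g Dg xb u) (wsv Dg Hg xb s u v)) y z) ->
      exists lam : vec R m, normal_cone D (g xb) lam /\ xs = (Dg xb)^T *m lam).
Proof.
move=> C2 cl lp Dg0 nu SOS.
have lp' := lp_locpoly lp.
have Tc := tangent_cone_cone (C := tangent_cone D (g xb)) (y := Dg xb *m u).
have i2 : 0 < (2 : R)^-1 by rewrite invr_gt0; lra.
split.
- move=> s y z hy hz ny _.
  apply: SOS => //; last exact: (nc_T_dir lp' Dg0 ny).
  have := nc_orth Tc ny.
  rewrite wsv_dot hy dot0l dot0r subr0 add0r => /eqP.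
  by rewrite mulf_eq0 (gt_eqF i2) /= => /eqP ->.
- move=> xs s y z al al0 v Hxs ny hy hz.
  have y0 : y = 0.
    apply: SOS => //; last exact: (nc_T_dir lp' Dg0 ny).
    have := nc_orth Tc ny.
    rewrite wsv_dot hy dot0l add0r /v dotZr => H.
    have dd0 := dot_ge0 y.
    have : 0 <= al * dot y y by apply: mulr_ge0.
    move: H; set q := hess_lag_quad Hg xb y u; set dd := dot y y => H H1.
    have : 0 <= 2^-1 * q by lra.
    by rewrite pmulr_rge0.
  subst y.
  exists z; split; last first.
    by rewrite Hxs /hess_lag big1 ?add0r // => i _; rewrite mxE scale0r.
  case: hz => [nz|tz].
    exact: dir_to_nc Dg0 (nc_T_dir lp' Dg0 nz).
  move: tz => [_ [t [zk [[tp tc] [cz Hk]]]]].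
  apply: (nc_closed (z := zk)) cz => k.
  have ti : 0 < (t k)^-1 by rewrite invr_gt0.
  have := nc_scale ti (Hk k).
  rewrite add0r scalerA mulVf ?gt_eqF // scale1r => H.
  exact: dir_to_nc Dg0 (nc_T_dir lp' Dg0 H).
Qed.
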